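(* For every normed plane $(V,\|\cdot\|)$, $$\frac13\le c_B(\|\cdot\|)\le 1,$$ and $c_B(\|\cdot\|)=1$ if and only if the norm is derived from an inner product.
   Context: A normed (Minkowski) plane $(V,\|\cdot\|)$ is a two-dimensional real vector space with a norm; $o$ is the origin, $B=\{v:\|v\|\le1\}$ the unit ball, $S=\{v:\|v\|=1\}$ the unit circle. For distinct $x,y$, $\mathrm{bis}(x,y)=\{z\in V:\|z-x\|=\|z-y\|\}$. For $x\in S$, the inner projection is $\mathrm{P_I}(x)=\{z/\|z\|: z\in(\mathrm{bis}(-x,x)\cap B)\setminus\{o\}\}$. The sine function is $s:S\times S\to\mathbb{R}$, $s(u,v)=\inf_{t\in\mathbb{R}}\|u+tv\|$. The constant $c_B$ is $c_B(\|\cdot\|)=\inf_{x\in S}\ \inf_{w\in\mathrm{P_I}(x)} s(w,x)$. *)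

(* Defs.v *)
(* A normed plane is modelled as R^2 = R*R
   equipped with an arbitrary norm (every 2-dim real vector space is
   linearly isomorphic to R^2, and c_B is invariant under such isomorphisms). *)
From Stdlib Require Import Reals.
Open Scope R_scope.

Definition vec := (R * R)%type.
Definition vadd (u v : vec) : vec := (fst u + fst v, snd u + snd v).
Definition vscale (a : R) (u : vec) : vec := (a * fst u, a * snd u).
Definition vopp (u : vec) : vec := vscale (-1) u.
Definition vsub (u v : vec) : vec := vadd u (vopp v).
Definition vzero : vec := (0, 0).

Definition is_norm (N : vec -> R) : Prop :=
  (forall v, 0 <= N v) /\
  (forall v, N v = 0 -> v = vzero) /\
  (forall a v, N (vscale a v) = Rabs a * N v) /\
  (forall u v, N (vadd u v) <= N u + N v).

Definition is_inf (A : R -> Prop) (m : R) : Prop :=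
  (forall y, A y -> m <= y) /\ (forall b, (forall y, A y -> b <= y) -> b <= m).

Definition bis (N : vec -> R) (x y : vec) (z : vec) : Prop :=
  N (vsub z x) = N (vsub z y).

Definition P_I (N : vec -> R) (x : vec) (w : vec) : Prop :=
  exists z, bis N (vopp x) x z /\ N z <= 1 /\ z <> vzero /\
            w = vscale (/ N z) z.

Definition sine (N : vec -> R) (u v : vec) (r : R) : Prop :=
  is_inf (fun y => exists t : R, y = N (vadd u (vscale t v))) r.

Definition cB_set (N : vec -> R) (r : R) : Prop :=
  exists x w, N x = 1 /\ P_I N x w /\ sine N w x r.

Definition cB (N : vec -> R) (c : R) : Prop := is_inf (cB_set N) c.

Definition inner_product_norm (N : vec -> R) : Prop :=
  exists ip : vec -> vec -> R,
    (forall u v, ip u v = ip v u) /\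
    (forall u v w, ip (vadd u v) w = ip u w + ip v w) /\
    (forall a u v, ip (vscale a u) v = a * ip u v) /\
    (forall u, u <> vzero -> 0 < ip u u) /\
    (forall u, N u = sqrt (ip u u)).

(* Main.v *)
Require Import Defs.
From Stdlib Require Import Reals Lra Classical.
Open Scope R_scope.


Ltac veq := apply injective_projections; unfold vsub, vopp, vadd, vscale, vzero; simpl; field.
Ltac veqs := apply injective_projections; unfold vsub, vopp, vadd, vscale, vzero; simpl; field; repeat split; try assumption; try lra.

Section Basic.
Variable N : vec -> R.
Hypothesis hN : is_norm N.

Lemma N_nonneg v : 0 <= N v.
Proof. destruct hN as [h _]; apply h. Qed.
Lemma N_scale a v : N (vscale a v) = Rabs a * N v.
Proof. destruct hN as [_ [_ [h _]]]; apply h. Qed.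
Lemma N_tri u v : N (vadd u v) <= N u + N v.
Proof. destruct hN as [_ [_ [_ h]]]; apply h. Qed.
Lemma N_eq0 v : N v = 0 -> v = vzero.
Proof. destruct hN as [_ [h _]]; apply h. Qed.

Lemma N_zero : N vzero = 0.
Proof. replace vzero with (vscale 0 vzero) by veq. rewrite N_scale, Rabs_R0; ring. Qed.

Lemma N_opp v : N (vopp v) = N v.
Proof. unfold vopp. rewrite N_scale. replace (Rabs (-1)) with 1 by (rewrite Rabs_left; lra); ring. Qed.

Lemma N_scale_pos a v : 0 <= a -> N (vscale a v) = a * N v.
Proof. intro. rewrite N_scale, Rabs_pos_eq; auto. Qed.

Lemma N_pos v : v <> vzero -> 0 < N v.
Proof. intro H. destruct (N_nonneg v) as [h|h]; auto. exfalso; apply H, N_eq0; auto. Qed.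

Lemma N_comb a b u v : N (vadd (vscale a u) (vscale b v)) <= Rabs a * N u + Rabs b * N v.
Proof. eapply Rle_trans; [apply N_tri|]. rewrite !N_scale; lra. Qed.

Lemma N_rev u v : N u - N v <= N (vsub u v).
Proof. assert (E: u = vadd (vsub u v) v) by veq.
  pose proof (N_tri (vsub u v) v) as H. rewrite <- E in H. lra. Qed.

Lemma N_sub_sym u v : N (vsub u v) = N (vsub v u).
Proof. replace (vsub u v) with (vopp (vsub v u)) by veq. apply N_opp. Qed.

Definition lin (p : vec) (t : R) (q : vec) := vadd p (vscale t q).

Lemma lin_conv p q t s l : 0 <= l <= 1 ->
  N (lin p (l*t + (1-l)*s) q) <= l * N (lin p t q) + (1-l) * N (lin p s q).
Proof. intro Hl. unfold lin.
  replace (vadd p (vscale (l*t+(1-l)*s) q)) with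
    (vadd (vscale l (vadd p (vscale t q))) (vscale (1-l) (vadd p (vscale s q)))) by veq.
  eapply Rle_trans; [apply N_comb|]. rewrite !Rabs_pos_eq; lra. Qed.

Lemma lin_lip p q t s : N (lin p t q) - N (lin p s q) <= Rabs (t - s) * N q.
Proof. unfold lin. eapply Rle_trans; [apply N_rev|].
  replace (vsub (vadd p (vscale t q)) (vadd p (vscale s q))) with (vscale (t-s) q) by veq.
  rewrite N_scale; lra. Qed.

Lemma N_pair_lip a b c d : N (a,b) - N (c,d) <= Rabs (a-c) * N (1,0) + Rabs (b-d) * N (0,1).
Proof. eapply Rle_trans; [apply N_rev|].
  replace (vsub (a,b) (c,d)) with (vadd (vscale (a-c) (1,0)) (vscale (b-d) (0,1))) by veq.
  apply N_comb. Qed.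

Lemma Ncont f g x : continuity_pt f x -> continuity_pt g x ->
  continuity_pt (fun t => N (f t, g t)) x.
Proof.
  unfold continuity_pt, continue_in, limit1_in, limit_in; simpl; unfold R_dist.
  intros Hf Hg eps He.
  set (K := N (1,0) + N (0,1) + 1).
  assert (HK : 0 < K) by (unfold K; pose proof (N_nonneg (1,0)); pose proof (N_nonneg (0,1)); lra).
  destruct (Hf (eps / K)) as [a1 [Ha1 H1]]. apply Rdiv_lt_0_compat; lra.
  destruct (Hg (eps / K)) as [a2 [Ha2 H2]]. apply Rdiv_lt_0_compat; lra.
  exists (Rmin a1 a2). split. apply Rmin_pos; lra.
  intros y [Dy Hy].
  assert (E1 := H1 y (conj Dy (Rlt_le_trans _ _ _ Hy (Rmin_l _ _)))).
  assert (E2 := H2 y (conj Dy (Rlt_le_trans _ _ _ Hy (Rmin_r _ _)))).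
  pose proof (N_pair_lip (f y) (g y) (f x) (g x)) as L1.
  pose proof (N_pair_lip (f x) (g x) (f y) (g y)) as L2.
  rewrite (Rabs_minus_sym (f x)), (Rabs_minus_sym (g x)) in L2.
  pose proof (N_nonneg (1,0)); pose proof (N_nonneg (0,1)).
  assert (B: Rabs (f y - f x) * N (1,0) + Rabs (g y - g x) * N (0,1) < eps).
  { assert (Rabs (f y - f x) * N (1,0) <= eps / K * N (1,0)) by (apply Rmult_le_compat_r; lra).
    assert (Rabs (g y - g x) * N (0,1) <= eps / K * N (0,1)) by (apply Rmult_le_compat_r; lra).
    assert (eps / K * N (1,0) + eps / K * N (0,1) < eps).
    { replace (eps / K * N (1,0) + eps / K * N (0,1)) with (eps * ((K - 1) / K)) by (unfold K; field; lra).
      rewrite <- (Rmult_1_r eps) at 2. apply Rmult_lt_compat_l; [lra|].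
      apply (Rmult_lt_reg_r K); [lra|]. unfold Rdiv; rewrite Rmult_assoc, Rinv_l; lra. }
    lra. }
  apply Rabs_def1; lra.
Qed.

Lemma lin_cont p q : continuity (fun t => N (lin p t q)).
Proof. intro x. destruct p as [p1 p2], q as [q1 q2]. unfold lin, vadd, vscale; simpl.
  apply (Ncont (fun t => p1 + t * q1) (fun t => p2 + t * q2)); reg. Qed.


Lemma cp_plus f g x : continuity_pt f x -> continuity_pt g x -> continuity_pt (fun t => f t + g t) x.
Proof. apply continuity_pt_plus. Qed.
Lemma cp_minus f g x : continuity_pt f x -> continuity_pt g x -> continuity_pt (fun t => f t - g t) x.
Proof. apply continuity_pt_minus. Qed.
Lemma cp_mult f g x : continuity_pt f x -> continuity_pt g x -> continuity_pt (fun t => f t * g t) x.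
Proof. apply continuity_pt_mult. Qed.
Lemma cp_inv f x : continuity_pt f x -> f x <> 0 -> continuity_pt (fun t => / f t) x.
Proof. apply continuity_pt_inv. Qed.
Lemma cp_const c x : continuity_pt (fun _ => c) x.
Proof. apply continuity_pt_const. intros a b; reflexivity. Qed.

Definition ncs (t : R) := N (cos t, sin t).

Lemma ncs_pos t : 0 < ncs t.
Proof. apply N_pos. intro H. injection H as H1 H2.
  pose proof (sin2_cos2 t). rewrite H1, H2 in H. unfold Rsqr in H. lra. Qed.

Lemma ncs_cont t : continuity_pt ncs t.
Proof. apply (Ncont cos sin); [apply continuity_cos | apply continuity_sin]. Qed.

Lemma iso_exists x : exists w, N w = 1 /\ N (vadd x w) = N (vsub x w).
Proof.
  destruct x as [x1 x2].
  set (h := fun t => N (x1 + cos t * / ncs t, x2 + sin t * / ncs t)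
                   - N (x1 - cos t * / ncs t, x2 - sin t * / ncs t)).
  assert (Hc : continuity h).
  { intro t. unfold h.
    assert (Hi : continuity_pt (fun t => / ncs t) t) by
      (apply cp_inv; [apply ncs_cont | pose proof (ncs_pos t); lra]).
    apply cp_minus.
    - apply (Ncont (fun t => x1 + cos t * / ncs t) (fun t => x2 + sin t * / ncs t));
      apply cp_plus; try apply cp_const; apply cp_mult; auto;
      [apply continuity_cos | apply continuity_sin].
    - apply (Ncont (fun t => x1 - cos t * / ncs t) (fun t => x2 - sin t * / ncs t));
      apply cp_minus; try apply cp_const; apply cp_mult; auto;
      [apply continuity_cos | apply continuity_sin]. }
  assert (Hpi : h PI = - h 0).
  { unfold h, ncs. rewrite cos_PI, sin_PI, cos_0, sin_0.
    replace (N (-1, 0)) with (N (1,0)).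
    2:{ replace (-1,0) with (vopp (1,0)) by veq. rewrite N_opp; auto. }
    replace (x1 + -1 * / N (1,0)) with (x1 - 1 * / N (1,0)) by ring.
    replace (x1 - -1 * / N (1,0)) with (x1 + 1 * / N (1,0)) by ring.
    replace (x2 + 0 * / N (1,0)) with (x2 - 0 * / N (1,0)) by ring. ring. }
  destruct (IVT_cor h 0 PI Hc) as [z [_ Hz]].
  { pose proof PI_RGT_0; lra. }
  { rewrite Hpi. assert (0 <= h 0 * h 0) by apply Rle_0_sqr. lra. }
  exists (vscale (/ ncs z) (cos z, sin z)). split.
  - rewrite N_scale. rewrite Rabs_pos_eq. fold (ncs z). field.
    pose proof (ncs_pos z); lra. pose proof (ncs_pos z). left; apply Rinv_0_lt_compat; lra.
  - unfold h in Hz. unfold vsub, vopp, vadd, vscale; simpl.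
    replace (x1 + / ncs z * cos z) with (x1 + cos z * / ncs z) by ring.
    replace (x2 + / ncs z * sin z) with (x2 + sin z * / ncs z) by ring.
    replace (x1 + -1 * (/ ncs z * cos z)) with (x1 - cos z * / ncs z) by ring.
    replace (x2 + -1 * (/ ncs z * sin z)) with (x2 - sin z * / ncs z) by ring.
    lra.
Qed.

End Basic.


Lemma inf_exists (A : R -> Prop) m : (exists y, A y) -> (forall y, A y -> m <= y) ->
  exists r, is_inf A r.
Proof.
  intros [y0 Hy0] Hm.
  destruct (completeness (fun z => A (- z))) as [l [Hub Hlub]].
  { exists (- m). intros z Hz. apply Hm in Hz. lra. }
  { exists (- y0). rewrite Ropp_involutive; auto. }
  exists (- l). split.
  - intros y Hy. assert (y0' : - y <= l). { apply Hub. rewrite Ropp_involutive; auto. } lra.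
  - intros b Hb. assert (l <= - b). { apply Hlub. intros z Hz. apply Hb in Hz. lra. } lra.
Qed.

Section S2.
Variable N : vec -> R.
Hypothesis hN : is_norm N.

Lemma sine_exists u v : exists r, sine N u v r.
Proof. apply (inf_exists _ 0).
  - exists (N (vadd u (vscale 0 v))); exists 0; auto.
  - intros y [t ->]. apply N_nonneg; auto. Qed.

Lemma half_pos x z s : N x = 1 -> N (vadd z x) = N (vsub z x) -> 0 <= s ->
  N z / 2 <= N (vadd z (vscale s x)).
Proof.
  intros Hx Hi Hs.
  assert (A1 : 2 <= N (vadd z x) + N (vsub z x)).
  { replace 2 with (N (vscale 2 x)) by (rewrite N_scale_pos; auto; lra).
    rewrite (N_sub_sym N hN).
    replace (vscale 2 x) with (vadd (vadd z x) (vsub x z)) by veq. apply N_tri; auto. }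
  assert (A2 : 2 * N z <= N (vadd z x) + N (vsub z x)).
  { rewrite <- (N_scale_pos N hN 2) by lra.
    replace (vscale 2 z) with (vadd (vadd z x) (vsub z x)) by veq. apply N_tri; auto. }
  destruct (Rle_lt_dec s 1) as [H1|H1].
  - assert (B1 : N z <= N (vadd z (vscale s x)) + s).
    { replace z with (vadd (vscale 1 (vadd z (vscale s x))) (vscale (-s) x)) at 1 by veq.
      eapply Rle_trans; [apply N_comb; auto|]. rewrite Rabs_R1, Rabs_left1 by lra. rewrite Hx. lra. }
    assert (B2 : N (vadd z x) <= N (vadd z (vscale s x)) + (1 - s)).
    { replace (vadd z x) with (vadd (vscale 1 (vadd z (vscale s x))) (vscale (1-s) x)) by veq.
      eapply Rle_trans; [apply N_comb; auto|]. rewrite Rabs_R1, (Rabs_pos_eq (1-s)) by lra. rewrite Hx. lra. }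
    lra.
  - assert (B : s * N (vadd z x) <= (s - 1) * N z + N (vadd z (vscale s x))).
    { rewrite <- (N_scale_pos N hN s) by lra.
      replace (vscale s (vadd z x)) with (vadd (vscale (s-1) z) (vscale 1 (vadd z (vscale s x)))) by veq.
      eapply Rle_trans; [apply N_comb; auto|]. rewrite Rabs_R1, (Rabs_pos_eq (s-1)) by lra. lra. }
    pose proof (N_nonneg N hN z).
    assert (s * N z <= s * N (vadd z x)) by (apply Rmult_le_compat_l; lra). nra.
Qed.

Lemma half_all x z s : N x = 1 -> N (vadd z x) = N (vsub z x) ->
  N z / 2 <= N (vadd z (vscale s x)).
Proof.
  intros Hx Hi. destruct (Rle_lt_dec 0 s).
  - apply half_pos; auto.
  - replace (vadd z (vscale s x)) with (vadd z (vscale (-s) (vopp x))) by veq.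
    apply half_pos; try lra.
    + rewrite N_opp; auto.
    + replace (vadd z (vopp x)) with (vsub z x) by veq.
      replace (vsub z (vopp x)) with (vadd z x) by veq. auto.
Qed.

End S2.


Section S3.
Variable N : vec -> R.
Hypothesis hN : is_norm N.

Lemma lin_C1 p q t1 t2 t3 : t1 < t2 < t3 ->
  (t3 - t1) * N (lin p t2 q) <= (t3 - t2) * N (lin p t1 q) + (t2 - t1) * N (lin p t3 q).
Proof.
  intros [H1 H2].
  set (l := (t3 - t2) / (t3 - t1)).
  assert (Hl : 0 <= l <= 1).
  { unfold l; split. unfold Rdiv; apply Rmult_le_pos; [lra|left; apply Rinv_0_lt_compat; lra].
    apply (Rmult_le_reg_r (t3 - t1)); [lra|]. unfold Rdiv; rewrite Rmult_assoc, Rinv_l; lra. }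
  pose proof (lin_conv N hN p q t1 t3 l Hl) as C.
  replace (l * t1 + (1 - l) * t3) with t2 in C by (unfold l; field; lra).
  apply (Rmult_le_compat_l (t3 - t1)) in C; [|lra].
  replace ((t3 - t1) * (l * N (lin p t1 q) + (1 - l) * N (lin p t3 q))) with
    ((t3 - t2) * N (lin p t1 q) + (t2 - t1) * N (lin p t3 q)) in C by (unfold l; field; lra).
  exact C.
Qed.


Lemma lin_mono_r p q t0 t1 t2 : (forall t, N (lin p t0 q) <= N (lin p t q)) -> t0 <= t1 <= t2 ->
  N (lin p t1 q) <= N (lin p t2 q).
Proof. intros Hm [H1 H2].
  destruct (Req_dec t0 t1) as [->|E1]; [apply Hm|].
  destruct (Req_dec t1 t2) as [->|E2]; [lra|].
  pose proof (lin_C1 p q t0 t1 t2 ltac:(lra)) as C.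
  assert ((t2 - t1) * N (lin p t0 q) <= (t2 - t1) * N (lin p t2 q)) by (apply Rmult_le_compat_l; [lra|apply Hm]).
  apply (Rmult_le_reg_l (t2 - t0)); lra. Qed.

Lemma lin_mono_l p q t0 t1 t2 : (forall t, N (lin p t0 q) <= N (lin p t q)) -> t2 <= t1 <= t0 ->
  N (lin p t1 q) <= N (lin p t2 q).
Proof. intros Hm [H1 H2].
  destruct (Req_dec t0 t1) as [->|E1]; [apply Hm|].
  destruct (Req_dec t1 t2) as [->|E2]; [lra|].
  pose proof (lin_C1 p q t2 t1 t0 ltac:(lra)) as C.
  assert ((t1 - t2) * N (lin p t0 q) <= (t1 - t2) * N (lin p t2 q)) by (apply Rmult_le_compat_l; [lra|apply Hm]).
  apply (Rmult_le_reg_l (t0 - t2)); lra. Qed.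


Section Face.
Variables a b : vec.
Hypothesis Ha : N a = 1.
Hypothesis Hb : N b = 1.
Let m := vscale (1/2) (vadd a b).
Let v := vsub a b.
Hypothesis Hm : N m = 1.

Lemma face1 t : -1/2 <= t <= 1/2 -> N (lin m t v) = 1.
Proof. intros Ht. apply Rle_antisym.
  - replace (lin m t v) with (vadd (vscale (1/2+t) a) (vscale (1/2-t) b)) by (unfold lin, m, v; veq).
    eapply Rle_trans; [apply N_comb; auto|]. rewrite Ha, Hb, !Rabs_pos_eq by lra. lra.
  - destruct (Rle_lt_dec 0 t).
    + set (al := 1/(1+2*t)).
      assert (E : m = vadd (vscale al (lin m t v)) (vscale (1 - al) b)).
      { unfold al, lin, m, v. apply injective_projections; unfold vsub, vopp, vadd, vscale; simpl; field; lra. }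
      pose proof (N_comb N hN al (1 - al) (lin m t v) b) as C.
      rewrite <- E, Hm, Hb in C.
      assert (0 < al <= 1).
      { unfold al; split. apply Rdiv_lt_0_compat; lra. apply (Rmult_le_reg_r (1+2*t)); [lra|].
        unfold Rdiv; rewrite Rmult_assoc, Rinv_l; lra. }
      rewrite !Rabs_pos_eq in C by lra.
      apply (Rmult_le_reg_l al); lra.
    + set (al := 1/(1-2*t)).
      assert (E : m = vadd (vscale al (lin m t v)) (vscale (1 - al) a)).
      { unfold al, lin, m, v. apply injective_projections; unfold vsub, vopp, vadd, vscale; simpl; field; lra. }
      pose proof (N_comb N hN al (1 - al) (lin m t v) a) as C.
      rewrite <- E, Hm, Ha in C.
      assert (0 < al <= 1).
      { unfold al; split. apply Rdiv_lt_0_compat; lra. apply (Rmult_le_reg_r (1-2*t)); [lra|].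
        unfold Rdiv; rewrite Rmult_assoc, Rinv_l; lra. }
      rewrite !Rabs_pos_eq in C by lra.
      apply (Rmult_le_reg_l al); lra.
Qed.

Lemma face2 t : 1 <= N (lin m t v).
Proof.
  destruct (Rle_lt_dec t (1/2)) as [H1|H1].
  - destruct (Rle_lt_dec (-1/2) t) as [H2|H2]. rewrite face1; lra.
    pose proof (lin_C1 m v t (-1/2) (1/2) ltac:(lra)) as C. rewrite (face1 (-1/2)), (face1 (1/2)) in C by lra. lra.
  - pose proof (lin_C1 m v (-1/2) (1/2) t ltac:(lra)) as C. rewrite (face1 (-1/2)), (face1 (1/2)) in C by lra. lra.
Qed.

End Face.
End S3.


Definition det (p q : vec) := fst p * snd q - snd p * fst q.
Definition sq (v : vec) := fst v * fst v + snd v * snd v.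

Lemma sq_pos v : v <> vzero -> 0 < sq v.
Proof. destruct v as [v1 v2]; unfold sq; simpl; intro H.
  destruct (Rle_lt_dec (v1*v1+v2*v2) 0) as [h|h]; auto.
  exfalso. assert (v1*v1+v2*v2 = 0) by (pose proof (Rle_0_sqr v1); pose proof (Rle_0_sqr v2); unfold Rsqr in *; lra).
  destruct (Rplus_sqr_eq_0 v1 v2) as [-> ->]; unfold Rsqr; auto. Qed.

Lemma par_of_det p v : v <> vzero -> det p v = 0 ->
  p = vscale ((fst p * fst v + snd p * snd v) / sq v) v.
Proof. intros Hv Hd. pose proof (sq_pos v Hv) as Hs. destruct p as [p1 p2], v as [v1 v2].
  unfold det, sq in *; simpl in *. unfold vscale; simpl.
  assert (E : p1 * v2 = p2 * v1) by lra.
  f_equal; apply (Rmult_eq_reg_r (v1*v1+v2*v2)); try lra; field_simplify; try lra.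
  - replace (p1 * v1 ^ 2 + p1 * v2 ^ 2) with (p1 * v1 ^ 2 + v2 * (p1 * v2)) by ring. rewrite E. ring.
  - replace (p2 * v1 ^ 2 + p2 * v2 ^ 2) with (v1 * (p2 * v1) + p2 * v2 ^ 2) by ring. rewrite <- E. ring.
Qed.

Lemma cramer p q w : det p q <> 0 ->
  w = vadd (vscale (det w q / det p q) p) (vscale (det p w / det p q) q).
Proof. intro H. destruct p as [p1 p2], q as [q1 q2], w as [w1 w2]. unfold det in *; simpl in *.
  unfold vadd, vscale; simpl. f_equal; field; auto. Qed.

Section US.
Variable N : vec -> R.
Hypothesis hN : is_norm N.
Variables a b : vec.
Hypothesis Ha : N a = 1.
Hypothesis Hb : N b = 1.
Let m := vscale (1/2) (vadd a b).
Let v := vsub a b.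
Hypothesis Hm : N m = 1.
Hypothesis Hv : v <> vzero.

Let f1 := face1 N hN a b Ha Hb Hm.

Lemma det_mv : det m v <> 0.
Proof. intro H. pose proof (par_of_det m v Hv H) as E.
  set (k := (fst m * fst v + snd m * snd v) / sq v) in E.
  assert (G : forall t, -1/2 <= t <= 1/2 -> Rabs (k + t) * N v = 1).
  { intros t Ht. rewrite <- (N_scale N hN). rewrite <- (f1 t Ht). f_equal.
    change (vscale (k + t) v = lin m t v). rewrite E. unfold lin. veq. }
  pose proof (N_pos N hN v Hv) as Hp.
  pose proof (G (1/2) ltac:(lra)) as G1. pose proof (G (-1/2) ltac:(lra)) as G2.
  pose proof (G 0 ltac:(lra)) as G3.
  assert (Rabs (k + 1/2) = Rabs (k + -1/2)) by (apply (Rmult_eq_reg_r (N v)); lra).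
  assert (k = 0).
  { revert H0. unfold Rabs; destruct (Rcase_abs (k+1/2)); destruct (Rcase_abs (k + -1/2)); lra. }
  subst k. rewrite H1, Rplus_0_r, Rabs_R0 in G3. lra.
Qed.

Lemma unique_support t w : -1/2 < t < 1/2 ->
  (forall s, 1 <= N (vadd (lin m t v) (vscale s w))) -> exists k, w = vscale k v.
Proof.
  intros Ht Hs.
  destruct (Req_dec (det w v) 0) as [Hd|Hd].
  { eexists; apply par_of_det; auto. }
  exfalso.
  pose proof det_mv as Hmv.
  set (be := det w v / det m v). set (al := det m w / det m v).
  assert (Ew : w = vadd (vscale be m) (vscale al v)) by (apply cramer; auto).
  assert (Hbe : be <> 0) by (unfold be; intro; apply Hd; apply (Rmult_eq_reg_r (/ det m v));
     [ rewrite Rmult_0_l; exact H | apply Rinv_neq_0_compat; auto]).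
  set (r := al / be).
  set (eta := 1/2 - Rabs t).
  assert (Heta : 0 < eta) by (unfold eta; unfold Rabs; destruct (Rcase_abs t); lra).
  assert (Hr : 0 <= Rabs r) by apply Rabs_pos.
  set (de := eta / (Rabs r + 1)).
  assert (Hde : 0 < de) by (unfold de; apply Rdiv_lt_0_compat; lra).
  assert (Hde2 : de * (Rabs r + 1) = eta) by (unfold de; field; lra).
  assert (Hde1 : de <= eta).
  { assert (de * 1 <= de * (Rabs r + 1)) by (apply Rmult_le_compat_l; lra). lra. }
  assert (Heta2 : eta <= 1/2) by (unfold eta; pose proof (Rabs_pos t); lra).
  set (sg := (t - de * r) / (1 - de)).
  assert (Hsg : -1/2 <= sg <= 1/2).
  { assert (A : Rabs (t - de * r) <= Rabs t + de * Rabs r).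
    { unfold Rminus. eapply Rle_trans; [apply Rabs_triang|]. rewrite Rabs_Ropp, Rabs_mult, (Rabs_pos_eq de) by lra. lra. }
    assert (B : Rabs t + de * Rabs r <= (1 - de) / 2) by (unfold eta in Hde2; lra).
    assert (C : Rabs (t - de * r) <= (1 - de)/2) by lra.
    assert (E2 : t - de * r = sg * (1 - de)) by (unfold sg; field; lra).
    rewrite E2 in C. revert C. unfold Rabs at 1. destruct (Rcase_abs (sg * (1 - de))); intro C.
    - split; [|apply (Rmult_le_reg_r (1 - de)); lra].
      apply (Rmult_le_reg_r (1 - de)); lra.
    - split; [apply (Rmult_le_reg_r (1 - de)); lra|].
      apply (Rmult_le_reg_r (1 - de)); lra. }
  assert (EV : vadd (lin m t v) (vscale (- de / be) w) = vscale (1 - de) (lin m sg v)).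
  { rewrite Ew. unfold lin. apply injective_projections; unfold vadd, vscale; simpl;
    unfold sg, r; field; split; auto; lra. }
  pose proof (Hs (- de / be)) as H1. rewrite EV in H1. rewrite (N_scale_pos N hN) in H1 by lra.
  rewrite f1 in H1 by lra. lra.
Qed.
End US.


Section SC.
Variable N : vec -> R.
Hypothesis hN : is_norm N.
Hypothesis HB : forall x z, x <> vzero -> N z <= N x -> N (vadd z x) = N (vsub z x) ->
  forall t, N z <= N (vadd z (vscale t x)).

Lemma SC_unit a b : N a = 1 -> N b = 1 -> N (vscale (1/2) (vadd a b)) = 1 -> a = b.
Proof.
  intros Ha Hb Hm. destruct (classic (a = b)) as [|Hab]; auto. exfalso.
  set (m := vscale (1/2) (vadd a b)) in *. set (v := vsub a b).
  assert (Hv : v <> vzero).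
  { intro E. apply Hab. replace a with (vadd (vsub a b) b) by veq. fold v. rewrite E. veq. }
  pose proof (N_pos N hN v Hv) as Hnv.
  set (K := / N v).
  assert (HK : 0 < K) by (apply Rinv_0_lt_compat; auto).
  set (g := fun t => N (lin m t v)).
  assert (F1 : forall t, -1/2 <= t <= 1/2 -> g t = 1) by (intros; apply (face1 N hN a b Ha Hb Hm); auto).
  assert (F2 : forall t, 1 <= g t) by (intros; apply (face2 N hN a b Ha Hb Hm)).
  assert (F4 : forall t, -1/2 < t < 1/2 -> g (t + K) = g (t - K)).
  { intros t Ht.
    set (x := lin m t v).
    destruct (iso_exists N hN x) as [w [Hw Hi]].
    assert (Hw0 : w <> vzero) by (intro E; rewrite E, (N_zero N hN) in Hw; lra).
    assert (Hx : N x = 1) by (apply F1; lra).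
    pose proof (HB w x Hw0 ltac:(lra) Hi) as Hs. rewrite Hx in Hs.
    destruct (unique_support N hN a b Ha Hb Hm Hv t w Ht Hs) as [k Ek].
    assert (Hk : Rabs k = K).
    { rewrite Ek, (N_scale N hN) in Hw. fold v in Hw. unfold K. apply (Rmult_eq_reg_r (N v)); [|lra].
      rewrite Hw. field. lra. }
    assert (E1 : vadd x w = lin m (t + k) v) by (rewrite Ek; unfold x, lin; veq).
    assert (E2 : vsub x w = lin m (t - k) v) by (rewrite Ek; unfold x, lin; veq).
    rewrite E1, E2 in Hi. unfold g.
    revert Hk. unfold Rabs. destruct (Rcase_abs k); intro Hk.
    - replace K with (-k) by lra. replace (t + -k) with (t - k) by ring.
      replace (t - - k) with (t + k) by ring. auto.
    - rewrite <- Hk. auto. }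
  assert (Mr : forall t1 t2, -1/2 <= t1 <= t2 -> g t1 <= g t2).
  { intros t1 t2 H. apply (lin_mono_r N hN m v (-1/2)); auto.
    intro t. fold (g (-1/2)). fold (g t). rewrite F1 by lra. apply F2. }
  assert (Ml : forall t1 t2, t2 <= t1 <= 1/2 -> g t1 <= g t2).
  { intros t1 t2 H. apply (lin_mono_l N hN m v (1/2)); auto.
    intro t. fold (g (1/2)). fold (g t). rewrite F1 by lra. apply F2. }
  pose proof (F4 0 ltac:(lra)) as A0. pose proof (F4 (1/4) ltac:(lra)) as A1.
  pose proof (F4 (-1/4) ltac:(lra)) as A2.
  replace (0 + K) with K in A0 by ring. replace (0 - K) with (-K) in A0 by ring.
  assert (B1 : g K <= g (1/4 + K)) by (apply Mr; lra).
  assert (B2 : g (1/4 - K) <= g (-K)) by (apply Ml; lra).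
  assert (C1 : g (-1/4 + K) <= g K) by (apply Mr; lra).
  assert (C2 : g (-K) <= g (-1/4 - K)) by (apply Ml; lra).
  assert (D1 : g (1/4 + K) = g K) by lra.
  assert (D2 : g (-1/4 - K) = g (-K)) by lra.
  assert (G : g K <= 1).
  { pose proof (lin_C1 N hN m v 0 K (1/4 + K) ltac:(lra)) as C. fold (g 0) (g K) (g (1/4+K)) in C.
    rewrite (F1 0) in C by lra. rewrite D1 in C. apply (Rmult_le_reg_l (1/4)); lra. }
  assert (P1 : g (1/4 + K) = 1) by (pose proof (F2 K); pose proof (F2 (1/4+K)); lra).
  assert (P2 : g (-1/4 - K) = 1) by (pose proof (F2 K); lra).
  pose proof (N_tri N hN (lin m (1/4+K) v) (vopp (lin m (-1/4-K) v))) as T.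
  rewrite (N_opp N hN) in T. fold (g (1/4+K)) (g (-1/4-K)) in T. rewrite P1, P2 in T.
  replace (vadd (lin m (1 / 4 + K) v) (vopp (lin m (-1/4 - K) v))) with (vscale (2*K + 1/2) v) in T
    by (unfold lin; veq).
  rewrite (N_scale_pos N hN) in T by lra.
  replace ((2 * K + 1/2) * N v) with (2 + N v / 2) in T by (unfold K; field; lra). lra.
Qed.
End SC.

Section Core.
Variable N : vec -> R.
Hypothesis hN : is_norm N.
Hypothesis HB : forall x z, x <> vzero -> N z <= N x -> N (vadd z x) = N (vsub z x) ->
  forall t, N z <= N (vadd z (vscale t x)).

Lemma SC_gen a b : N a = N b -> N (vscale (1/2) (vadd a b)) = N a -> a = b.
Proof.
  intros Hab Hm.
  destruct (Req_dec (N a) 0) as [H0|H0].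
  { rewrite (N_eq0 N hN a H0). rewrite Hab in H0. rewrite (N_eq0 N hN b H0). auto. }
  pose proof (N_nonneg N hN a) as Hp.
  set (mu := N a) in *.
  assert (E : vscale (/ mu) a = vscale (/ mu) b).
  { apply (SC_unit N hN HB).
    - rewrite (N_scale_pos N hN) by (left; apply Rinv_0_lt_compat; lra). unfold mu; field; auto.
    - rewrite (N_scale_pos N hN) by (left; apply Rinv_0_lt_compat; lra). rewrite <- Hab. unfold mu; field; auto.
    - replace (vscale (1/2) (vadd (vscale (/ mu) a) (vscale (/ mu) b))) with
        (vscale (/ mu) (vscale (1/2) (vadd a b))) by veqs.
      rewrite (N_scale_pos N hN) by (left; apply Rinv_0_lt_compat; lra). rewrite Hm. field; auto. }
  replace a with (vscale mu (vscale (/ mu) a)) by veqs.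
  rewrite E. veqs.
Qed.

Lemma core1 w u k : u <> vzero -> N w <= N u -> N (vadd w u) = N (vsub w u) -> 1 <= k ->
  N (lin w k u) <= N (lin w (-k) u) -> N (lin w k u) = N (lin w (-k) u).
Proof.
  intros Hu Hwu Hi Hk Hle.
  destruct (Rle_lt_dec (N (lin w (-k) u)) (N (lin w k u))) as [H|H]; [lra|]. exfalso.
  set (F := fun t => N (lin w t u)).
  fold (F k) (F (-k)) in H.
  assert (Fmin : forall t, F 0 <= F t).
  { intro t. unfold F. replace (N (lin w 0 u)) with (N w) by (f_equal; unfold lin; veq).
    apply HB; auto. }
  assert (F1 : F 1 = N (vadd w u)) by (unfold F; f_equal; unfold lin; veq).
  assert (Fm1 : F (-1) = N (vsub w u)) by (unfold F; f_equal; unfold lin; veq).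
  assert (F1k : F 1 <= F k) by (unfold F; apply (lin_mono_r N hN w u 0); auto; lra).
  destruct (IVT_cor (fun t => F t - F k) (-k) (-1)) as [t1 [Ht1 Ht1e]].
  { intro x. apply cp_minus. apply (lin_cont N hN w u). apply cp_const. }
  { lra. }
  { assert (0 < F (-k) - F k) by lra. assert (F (-1) - F k <= 0) by lra.
    assert (0 <= (F (-k) - F k) * (- (F (-1) - F k))) by (apply Rmult_le_pos; lra). lra. }
  simpl in Ht1e.
  set (s := (t1 + k) / 2). set (la := (k - t1) / 2).
  pose proof (N_pos N hN u Hu) as Hnu.
  set (c := lin w s u).
  assert (Hla0 : vscale la u <> vzero).
  { intro E. apply (f_equal N) in E. rewrite (N_scale_pos N hN), (N_zero N hN) in E by (unfold la; lra).
    unfold la in E. nra. }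
  assert (Hc : N c <= N (vscale la u)).
  { rewrite (N_scale_pos N hN) by (unfold la; lra). unfold c, lin.
    eapply Rle_trans; [apply (N_tri N hN)|]. rewrite (N_scale_pos N hN) by (unfold s; lra).
    assert (s * N u + N u <= la * N u).
    { replace (la * N u) with (s * N u + (- t1) * N u) by (unfold la, s; field).
      assert (N u <= - t1 * N u) by (rewrite <- (Rmult_1_l (N u)) at 1; apply Rmult_le_compat_r; lra). lra. }
    lra. }
  assert (Hci : N (vadd c (vscale la u)) = N (vsub c (vscale la u))).
  { replace (vadd c (vscale la u)) with (lin w k u) by (unfold c, lin, s, la; veq).
    replace (vsub c (vscale la u)) with (lin w t1 u) by (unfold c, lin, s, la; veq).
    fold (F k) (F t1). lra. }
  pose proof (HB (vscale la u) c Hla0 Hc Hci (- s / la)) as Hs.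
  assert (Hla : 0 < la) by (unfold la; lra).
  replace (vadd c (vscale (- s / la) (vscale la u))) with w in Hs
    by (unfold c, lin; apply injective_projections; unfold vadd, vscale; simpl; field; lra).
  fold c in Hs.
  assert (Fs : F s = F 0).
  { assert (F0 : F 0 = N w) by (unfold F; f_equal; unfold lin; veq).
    pose proof (Fmin s). rewrite F0 in *. unfold F in *. unfold c in Hs. lra. }
  assert (Hs0 : s <> 0).
  { intro E. assert (t1 = -k) by (unfold s in E; lra). subst t1. fold (F (-k)) in Ht1e. lra. }
  assert (Hs1 : 0 < s). { assert (Hs2 : 0 <= s) by (unfold s; lra). destruct Hs2 as [h|h]; auto. exfalso; apply Hs0; auto. }
  assert (Fh : F (s/2) = F 0).
  { pose proof (lin_C1 N hN w u 0 (s/2) s ltac:(lra)) as C. fold (F 0) (F (s/2)) (F s) in C.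
    pose proof (Fmin (s/2)). rewrite Fs in C.
    apply Rle_antisym; auto. apply (Rmult_le_reg_l s); lra. }
  assert (E : w = lin w s u).
  { apply SC_gen.
    - unfold F in Fs. rewrite Fs. f_equal; unfold lin; veq.
    - replace (vscale (1/2) (vadd w (lin w s u))) with (lin w (s/2) u) by (unfold lin; veq).
      fold (F (s/2)). rewrite Fh. unfold F; f_equal; unfold lin; veq. }
  apply (f_equal (fun p => N (vsub p w))) in E.
  replace (vsub w w) with vzero in E by veq.
  replace (vsub (lin w s u) w) with (vscale s u) in E by (unfold lin; veq).
  rewrite (N_zero N hN), (N_scale_pos N hN) in E by lra. nra.
Qed.

Lemma core w u k : u <> vzero -> N w <= N u -> N (vadd w u) = N (vsub w u) -> 1 <= k ->
  N (lin w k u) = N (lin w (-k) u).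
Proof.
  intros Hu Hwu Hi Hk.
  destruct (Rle_lt_dec (N (lin w k u)) (N (lin w (-k) u))) as [H|H].
  - apply core1; auto.
  - symmetry.
    replace (lin w k u) with (lin w (-k) (vopp u)) by (unfold lin; veq).
    replace (lin w (-k) u) with (lin w k (vopp u)) by (unfold lin; veq).
    apply core1; auto.
    + intro E. apply Hu. replace u with (vopp (vopp u)) by veq. rewrite E. veq.
    + rewrite (N_opp N hN); auto.
    + replace (vadd w (vopp u)) with (vsub w u) by veq.
      replace (vsub w (vopp u)) with (vadd w u) by veq. auto.
    + replace (lin w k (vopp u)) with (lin w (-k) u) by (unfold lin; veq).
      replace (lin w (-k) (vopp u)) with (lin w k u) by (unfold lin; veq). lra.
Qed.
End Core.


Section EH.
Variable N : vec -> R.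
Hypothesis hN : is_norm N.
Hypothesis HB : forall x z, x <> vzero -> N z <= N x -> N (vadd z x) = N (vsub z x) ->
  forall t, N z <= N (vadd z (vscale t x)).

Lemma EH_pos w u k : N w = N u -> N (vadd w u) = N (vsub w u) -> 0 <= k ->
  N (lin w k u) = N (lin w (-k) u).
Proof.
  intros Hn Hi Hk.
  destruct (classic (u = vzero)) as [Hu|Hu].
  { subst u. f_equal. unfold lin. veq. }
  assert (Hw : w <> vzero).
  { intro E. rewrite E, (N_zero N hN) in Hn. apply Hu, (N_eq0 N hN). auto. }
  destruct (Rle_lt_dec 1 k) as [H1|H1].
  { apply (core N hN HB); auto; lra. }
  destruct (Req_dec k 0) as [H0|H0].
  { subst k. f_equal. unfold lin. veq. }
  assert (Hk' : 0 < k) by lra.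
  pose proof (core N hN HB u w (/k) Hw ltac:(lra)) as C.
  assert (Hi' : N (vadd u w) = N (vsub u w)).
  { replace (vadd u w) with (vadd w u) by veq. rewrite Hi, (N_sub_sym N hN). auto. }
  specialize (C Hi').
  assert (Hk1 : 1 <= / k).
  { rewrite <- Rinv_1. apply Rinv_le_contravar; lra. }
  specialize (C Hk1).
  replace (lin w k u) with (vscale k (lin u (/k) w)) by (unfold lin; veqs).
  replace (lin w (-k) u) with (vscale (-k) (lin u (- / k) w)) by (unfold lin; veqs).
  rewrite !(N_scale N hN), C. rewrite Rabs_Ropp. auto.
Qed.

Lemma EH w u k : N w = N u -> N (vadd w u) = N (vsub w u) ->
  N (lin w k u) = N (lin w (-k) u).
Proof.
  intros Hn Hi. destruct (Rle_lt_dec 0 k).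
  - apply EH_pos; auto.
  - symmetry. replace k with (- (-k)) at 2 by ring. apply EH_pos; auto; lra.
Qed.

Lemma EH2 w u al be : N w = N u -> N (vadd w u) = N (vsub w u) ->
  N (vadd (vscale al w) (vscale be u)) = N (vadd (vscale al w) (vscale (-be) u)).
Proof.
  intros Hn Hi.
  destruct (Req_dec al 0) as [H0|H0].
  { subst al. replace (vadd (vscale 0 w) (vscale be u)) with (vscale be u) by veq.
    replace (vadd (vscale 0 w) (vscale (-be) u)) with (vscale (-be) u) by veq.
    rewrite !(N_scale N hN), Rabs_Ropp. auto. }
  replace (vadd (vscale al w) (vscale be u)) with (vscale al (lin w (be/al) u)) by (unfold lin; veqs).
  replace (vadd (vscale al w) (vscale (-be) u)) with (vscale al (lin w (-(be/al)) u)) by (unfold lin; veqs).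
  rewrite !(N_scale N hN). f_equal. apply EH; auto.
Qed.
End EH.


Section Euc.
Variable N : vec -> R.
Hypothesis hN : is_norm N.
Hypothesis HB : forall x z, x <> vzero -> N z <= N x -> N (vadd z x) = N (vsub z x) ->
  forall t, N z <= N (vadd z (vscale t x)).

Lemma inner_of_HB : inner_product_norm N.
Proof.
  set (e1 := vscale (/ N (1,0)) (1,0)).
  assert (H10 : 0 < N (1,0)) by (apply (N_pos N hN); intro E; injection E; lra).
  assert (He1 : N e1 = 1).
  { unfold e1. rewrite (N_scale_pos N hN) by (left; apply Rinv_0_lt_compat; lra). field; lra. }
  clearbody e1.
  destruct (iso_exists N hN e1) as [e2 [He2 Hi]].
  set (L := fun x y => vadd (vscale x e1) (vscale y e2)).
  set (M := fun x y => N (L x y)).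
  assert (R1 : forall x y, M x y = M x (-y)).
  { intros x y. unfold M, L. apply (EH2 N hN HB); lra. }
  assert (Sw : forall x y, M x y = M y x).
  { intros x y. unfold M, L.
    pose proof (EH2 N hN HB (vadd e1 e2) (vsub e1 e2) ((x+y)/2) ((x-y)/2)) as E.
    replace (vadd (vscale ((x + y) / 2) (vadd e1 e2)) (vscale ((x - y) / 2) (vsub e1 e2)))
      with (vadd (vscale x e1) (vscale y e2)) in E by veq.
    replace (vadd (vscale ((x + y) / 2) (vadd e1 e2)) (vscale (- ((x - y) / 2)) (vsub e1 e2)))
      with (vadd (vscale y e1) (vscale x e2)) in E by veq.
    apply E; auto.
    replace (vadd (vadd e1 e2) (vsub e1 e2)) with (vscale 2 e1) by veq.
    replace (vsub (vadd e1 e2) (vsub e1 e2)) with (vscale 2 e2) by veq.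
    rewrite !(N_scale N hN), He1, He2. auto. }
  assert (Rot : forall x y, M (-y) x = M x y).
  { intros x y. rewrite Sw, <- R1. auto. }
  assert (Hdet : det e1 e2 <> 0).
  { intro Hd. assert (He10 : e1 <> vzero) by (intro E; rewrite E, (N_zero N hN) in He1; lra).
    pose proof (par_of_det e2 e1 He10) as P.
    assert (Hd' : det e2 e1 = 0) by (unfold det in *; lra).
    specialize (P Hd'). set (k := (fst e2 * fst e1 + snd e2 * snd e1) / sq e1) in P.
    rewrite P in Hi, He2.
    replace (vadd e1 (vscale k e1)) with (vscale (1 + k) e1) in Hi by veq.
    replace (vsub e1 (vscale k e1)) with (vscale (1 - k) e1) in Hi by veq.
    rewrite !(N_scale N hN), He1 in Hi. rewrite (N_scale N hN), He1 in He2.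
    revert Hi He2. unfold Rabs. destruct (Rcase_abs (1+k)), (Rcase_abs (1-k)), (Rcase_abs k); intros; lra. }
  assert (Linj : forall x y, L x y = vzero -> x = 0 /\ y = 0).
  { intros x y E. unfold L, vadd, vscale, vzero in E. simpl in E. injection E as E1 E2.
    unfold det in Hdet.
    assert (x * det e1 e2 = snd e2 * (x * fst e1 + y * fst e2) - fst e2 * (x * snd e1 + y * snd e2)) by (unfold det; ring).
    assert (y * det e1 e2 = fst e1 * (x * snd e1 + y * snd e2) - snd e1 * (x * fst e1 + y * fst e2)) by (unfold det; ring).
    rewrite E1, E2 in *. 
    unfold det in *. split; [apply (Rmult_eq_reg_r (fst e1 * snd e2 - snd e1 * fst e2)) |
      apply (Rmult_eq_reg_r (fst e1 * snd e2 - snd e1 * fst e2))]; lra. }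
  assert (U : forall a b, a*a + b*b = 1 -> M a b = 1).
  { intros a b Hab.
    destruct (Req_dec a (-1)) as [Ha|Ha].
    { assert (b = 0) by (subst a; nra). subst a b. unfold M, L.
      replace (vadd (vscale (-1) e1) (vscale 0 e2)) with (vopp e1) by veq. rewrite (N_opp N hN); auto. }
    assert (Ha1 : -1 < a) by nra.
    set (d1 := 1 + a).
    set (D := L d1 b).
    assert (HD : D <> vzero) by (intro E; apply Linj in E; unfold d1 in E; lra).
    pose proof (N_pos N hN D HD) as HnD. assert (HnD' : N D <> 0) by lra.
    set (v := vscale (/ N D) D). set (v' := vscale (/ N D) (L (-b) d1)).
    assert (Hv : N v = 1) by (unfold v; rewrite (N_scale_pos N hN) by (left; apply Rinv_0_lt_compat; lra); field; lra).
    assert (Hv' : N v' = 1).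
    { unfold v'. rewrite (N_scale_pos N hN) by (left; apply Rinv_0_lt_compat; lra).
      assert (ED : N D = M d1 b) by reflexivity.
      change (/ N D * M (-b) d1 = 1). rewrite Rot, <- ED. field. lra. }
    assert (Hvv : N (vadd v v') = N (vsub v v')).
    { replace (vadd v v') with (vscale (/ N D) (L (d1 - b) (b + d1))) by (unfold v, v', L; veqs).
      replace (vsub v v') with (vscale (/ N D) (L (d1 + b) (b - d1))) by (unfold v, v', L; veqs).
      rewrite !(N_scale N hN). f_equal. fold (M (d1 - b) (b + d1)) (M (d1 + b) (b - d1)).
      rewrite (R1 (d1 + b)), Sw. f_equal; ring. }
    assert (S2 : d1 * d1 + b * b = 2 * d1) by (unfold d1; lra).
    assert (S3 : d1 * d1 - b * b = 2 * a * d1) by (unfold d1; lra).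
    assert (Hd1 : d1 <> 0) by (unfold d1; lra).
    set (al := N D / 2). set (be := N D * (- b) / (2 * d1)).
    pose proof (EH2 N hN HB v v' al be ltac:(lra) Hvv) as E.
    replace (vadd (vscale al v) (vscale be v')) with (L ((d1*d1+b*b)/(2*d1)) 0) in E
      by (unfold al, be, v, v', D, L; veqs).
    replace (vadd (vscale al v) (vscale (- be) v')) with (L ((d1*d1-b*b)/(2*d1)) b) in E
      by (unfold al, be, v, v', D, L; veqs).
    rewrite S2, S3 in E. replace (2 * d1 / (2 * d1)) with 1 in E by (field; auto).
    replace (2 * a * d1 / (2 * d1)) with a in E by (field; auto).
    unfold M. rewrite <- E. unfold L. replace (vadd (vscale 1 e1) (vscale 0 e2)) with e1 by veq. auto. }
  assert (Msq : forall x y, M x y = sqrt (x*x + y*y)).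
  { intros x y.
    destruct (Req_dec (x*x+y*y) 0) as [H0|H0].
    { assert (x = 0 /\ y = 0) as [-> ->] by (split; nra).
      replace (0*0+0*0) with 0 by ring. rewrite sqrt_0. unfold M, L. replace (vadd (vscale 0 e1) (vscale 0 e2)) with vzero by veq.
      apply (N_zero N hN). }
    assert (Hp : 0 < x*x+y*y) by nra.
    set (r := sqrt (x*x+y*y)).
    assert (Hr : 0 < r) by (apply sqrt_lt_R0; auto).
    assert (Hrr : r * r = x*x+y*y) by (apply sqrt_sqrt; lra).
    assert (E : L x y = vscale r (L (x/r) (y/r))) by (unfold L; veqs).
    unfold M. rewrite E, (N_scale_pos N hN) by lra. fold (M (x/r) (y/r)). rewrite U. ring.
    replace ((x/r)*(x/r)+(y/r)*(y/r)) with ((x*x+y*y)/(r*r)) by (field; lra). rewrite Hrr. field. lra. }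
  set (cx := fun p : vec => (fst p * snd e2 - snd p * fst e2) / det e1 e2).
  set (cy := fun p : vec => (fst e1 * snd p - snd e1 * fst p) / det e1 e2).
  assert (Ecoord : forall p, p = L (cx p) (cy p)).
  { intro p. unfold L, cx, cy. pose proof (cramer e1 e2 p Hdet) as C. unfold det in C at 1 2. exact C. }
  exists (fun p q => cx p * cx q + cy p * cy q).
  split; [intros; ring|].
  split; [intros u v w; unfold cx, cy, vadd; simpl; field; auto|].
  split; [intros a u v; unfold cx, cy, vscale; simpl; field; auto|].
  split.
  - intros u Hu. destruct (Req_dec (cx u * cx u + cy u * cy u) 0) as [H0|H0].
    + exfalso. apply Hu. rewrite (Ecoord u). assert (cx u = 0 /\ cy u = 0) as [-> ->] by (split; nra).
      unfold L; veq.
    + nra.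
  - intro u. rewrite (Ecoord u) at 1. fold (M (cx u) (cy u)). apply Msq.
Qed.
End Euc.


Section Main.
Variable N : vec -> R.
Hypothesis hN : is_norm N.

Lemma bis_iff x z : bis N (vopp x) x z <-> N (vadd z x) = N (vsub z x).
Proof. unfold bis. replace (vsub z (vopp x)) with (vadd z x) by veq. tauto. Qed.

Lemma cB_set_lb r : cB_set N r -> 1/2 <= r.
Proof.
  intros [x [w [Hx [HP Hs]]]]. destruct HP as [z [Hb [Hz [Hz0 Ew]]]]. subst w.
  apply bis_iff in Hb. destruct Hs as [_ Hglb]. apply Hglb.
  intros y [t ->].
  pose proof (N_pos N hN z Hz0) as Hp.
  replace (vadd (vscale (/ N z) z) (vscale t x)) with (vscale (/ N z) (vadd z (vscale (t * N z) x))) by veqs.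
  rewrite (N_scale_pos N hN) by (left; apply Rinv_0_lt_compat; lra).
  pose proof (half_all N hN x z (t * N z) Hx Hb) as H.
  apply (Rmult_le_reg_l (N z)); auto.
  replace (N z * (/ N z * N (vadd z (vscale (t * N z) x)))) with (N (vadd z (vscale (t * N z) x))) by (field; lra).
  lra.
Qed.

Lemma cB_set_ub r : cB_set N r -> r <= 1.
Proof.
  intros [x [w [Hx [HP Hs]]]]. destruct HP as [z [Hb [Hz [Hz0 Ew]]]].
  destruct Hs as [Hlb _]. eapply Rle_trans; [apply Hlb; exists 0; reflexivity|].
  replace (vadd w (vscale 0 x)) with w by veq. rewrite Ew.
  pose proof (N_pos N hN z Hz0).
  rewrite (N_scale_pos N hN) by (left; apply Rinv_0_lt_compat; lra). right; field; lra.
Qed.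

Lemma cB_set_ne : exists r, cB_set N r.
Proof.
  set (x0 := vscale (/ N (1,0)) (1,0)).
  assert (H10 : 0 < N (1,0)) by (apply (N_pos N hN); intro E; injection E; lra).
  assert (Hx0 : N x0 = 1).
  { unfold x0. rewrite (N_scale_pos N hN) by (left; apply Rinv_0_lt_compat; lra). field; lra. }
  clearbody x0.
  destruct (iso_exists N hN x0) as [w0 [Hw0 Hi]].
  assert (Hw00 : w0 <> vzero) by (intro E; rewrite E, (N_zero N hN) in Hw0; lra).
  destruct (sine_exists N hN (vscale (/ N w0) w0) x0) as [r Hr].
  exists r, x0, (vscale (/ N w0) w0). split; auto. split; auto.
  exists w0. split; [|split; [lra|split; auto]].
  apply bis_iff. replace (vadd w0 x0) with (vadd x0 w0) by veq. rewrite Hi. apply (N_sub_sym N hN).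
Qed.

Lemma HB_of_c1 : cB N 1 -> forall x z, x <> vzero -> N z <= N x -> N (vadd z x) = N (vsub z x) ->
  forall t, N z <= N (vadd z (vscale t x)).
Proof.
  intros [Hlb _].
  assert (HU : forall x z, N x = 1 -> z <> vzero -> N z <= 1 -> N (vadd z x) = N (vsub z x) ->
            forall t, N z <= N (vadd z (vscale t x))).
  { intros x z Hx Hz0 Hz Hi t.
    pose proof (N_pos N hN z Hz0) as Hp.
    destruct (sine_exists N hN (vscale (/ N z) z) x) as [r Hr].
    assert (Hc : 1 <= r).
    { apply Hlb. exists x, (vscale (/ N z) z). split; auto. split; auto.
      exists z. split; [apply bis_iff; auto|split; auto]. }
    destruct Hr as [Hr _].
    specialize (Hr (N (vadd (vscale (/ N z) z) (vscale (t / N z) x)))).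
    assert (1 <= N (vadd (vscale (/ N z) z) (vscale (t / N z) x))).
    { eapply Rle_trans; [exact Hc|]. apply Hr. eexists; reflexivity. }
    replace (vadd (vscale (/ N z) z) (vscale (t / N z) x)) with (vscale (/ N z) (vadd z (vscale t x))) in H by veqs.
    rewrite (N_scale_pos N hN) in H by (left; apply Rinv_0_lt_compat; lra).
    apply (Rmult_le_reg_l (/ N z)). apply Rinv_0_lt_compat; lra.
    rewrite Rinv_l; lra. }
  intros x z Hx0 Hzx Hi t.
  destruct (classic (z = vzero)) as [Hz|Hz].
  { subst z. rewrite (N_zero N hN). apply (N_nonneg N hN). }
  pose proof (N_pos N hN x Hx0) as Hp.
  assert (Hip : 0 < / N x) by (apply Rinv_0_lt_compat; lra).
  assert (Hnx : N x <> 0) by lra.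
  pose proof (HU (vscale (/ N x) x) (vscale (/ N x) z)) as H.
  rewrite !(N_scale_pos N hN) in H by lra.
  replace (vadd (vscale (/ N x) z) (vscale (/ N x) x)) with (vscale (/ N x) (vadd z x)) in H by veqs.
  replace (vsub (vscale (/ N x) z) (vscale (/ N x) x)) with (vscale (/ N x) (vsub z x)) in H by veqs.
  rewrite !(N_scale_pos N hN) in H by lra.
  assert (E : forall s, vadd (vscale (/ N x) z) (vscale s (vscale (/ N x) x)) = vscale (/ N x) (vadd z (vscale s x)))
    by (intro; veqs).
  specialize (H ltac:(field; lra)).
  assert (vscale (/ N x) z <> vzero).
  { intro E0. apply (f_equal N) in E0. rewrite (N_scale_pos N hN), (N_zero N hN) in E0 by lra.
    apply Hz, (N_eq0 N hN). nra. }
  specialize (H H0).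
  assert (/ N x * N z <= 1).
  { apply (Rmult_le_reg_l (N x)); auto. replace (N x * (/ N x * N z)) with (N z) by (field; lra). lra. }
  specialize (H H1 ltac:(rewrite Hi; auto) t).
  rewrite E, (N_scale_pos N hN) in H by lra.
  apply (Rmult_le_reg_l (/ N x)); auto.
Qed.


Lemma inner_r1 : inner_product_norm N -> forall r, cB_set N r -> 1 <= r.
Proof.
  intros [ip [Hsym [Hadd [Hsc [Hpos HN]]]]] r [x [w [Hx [HP Hs]]]].
  destruct HP as [z [Hb [Hz [Hz0 Ew]]]]. apply bis_iff in Hb.
  assert (Hnn : forall u, 0 <= ip u u).
  { intro u. destruct (classic (u = vzero)) as [->|H]; [|left; apply Hpos; auto].
    replace vzero with (vscale 0 vzero) by veq. rewrite Hsc. lra. }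
  assert (Hsq : forall u, N u * N u = ip u u) by (intro u; rewrite HN; apply sqrt_sqrt; auto).
  assert (Exp : forall a b u v, ip (vadd (vscale a u) (vscale b v)) (vadd (vscale a u) (vscale b v))
                 = a*a*ip u u + 2*a*b*ip u v + b*b*ip v v).
  { intros a b u v. rewrite Hadd, !Hsc.
    rewrite (Hsym u), (Hsym v), !Hadd, !Hsc. rewrite (Hsym v u). ring. }
  assert (Hzx : ip z x = 0).
  { assert (E1 : N (vadd z x) * N (vadd z x) = N (vsub z x) * N (vsub z x)) by (rewrite Hb; auto).
    rewrite !Hsq in E1.
    replace (vadd z x) with (vadd (vscale 1 z) (vscale 1 x)) in E1 by veq.
    replace (vsub z x) with (vadd (vscale 1 z) (vscale (-1) x)) in E1 by veq.
    rewrite !Exp in E1. lra. }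
  pose proof (N_pos N hN z Hz0) as Hp.
  destruct Hs as [_ Hglb]. apply Hglb. intros y [t ->].
  assert (Q : N (vadd w (vscale t x)) * N (vadd w (vscale t x)) = 1 + t*t).
  { rewrite Hsq, Ew, Exp, <- !Hsq, Hx, Hzx. field. lra. }
  pose proof (N_nonneg N hN (vadd w (vscale t x))).
  destruct (Rle_lt_dec 1 (N (vadd w (vscale t x)))); auto.
  assert (N (vadd w (vscale t x)) * N (vadd w (vscale t x)) < 1 * 1).
  { apply Rmult_le_0_lt_compat; lra. }
  nra.
Qed.

End Main.

Theorem theorem4p1 (N : vec -> R) (hN : is_norm N) :
  (exists c, cB N c) /\
  (forall c, cB N c ->
     1/3 <= c /\ c <= 1 /\ (c = 1 <-> inner_product_norm N)).
Proof.
  destruct (cB_set_ne N hN) as [r0 Hr0].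
  split.
  { apply (inf_exists _ 0). exists r0; auto.
    intros y Hy. pose proof (cB_set_lb N hN y Hy). lra. }
  intros c [Hlb Hglb].
  assert (H12 : 1/2 <= c) by (apply Hglb; apply cB_set_lb; auto).
  assert (Hc1 : c <= 1) by (eapply Rle_trans; [apply Hlb; exact Hr0| apply (cB_set_ub N hN); auto]).
  split; [lra|]. split; auto. split.
  - intro E. subst c. apply (inner_of_HB N hN). apply HB_of_c1; auto. split; auto.
  - intro Hip. apply Rle_antisym; auto. apply Hglb. apply inner_r1; auto.
Qed.
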